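(* Let $\lambda$ be a nonzero real number. For every $n\in\mathbb{N}$ and every real $x$ with $1+\lambda x>0$, \[ \mathrm{Bel}_{n,\lambda}'(x)=\frac{1}{1+\lambda x}\sum_{l=0}^{n-1}\binom{n}{l}\big(\mathrm{Bel}_{l,\lambda}(x)-\lambda\,\mathrm{Bel}_{l+1,\lambda}(x)\big), \] where $\mathrm{Bel}_{n,\lambda}'(x)=\frac{d}{dx}\mathrm{Bel}_{n,\lambda}(x)$.
   Context: For nonzero real $\lambda$, $e_\lambda(x)=(1+\lambda x)^{1/\lambda}$ and $e_\lambda^{-1}(x)=(1+\lambda x)^{-1/\lambda}$. The new type degenerate Bell polynomials $\mathrm{Bel}_{n,\lambda}(x)$ are defined by $e_{\lambda}(xe^{t})\,e_{\lambda}^{-1}(x)=\big(\frac{1+\lambda xe^t}{1+\lambda x}\big)^{1/\lambda}=\sum_{n=0}^{\infty}\mathrm{Bel}_{n,\lambda}(x)\frac{t^{n}}{n!}$ (expansion in powers of $t$). *)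

(* Defs.v *)
From Stdlib Require Import Reals List.
From Coquelicot Require Import Coquelicot.
Open Scope R_scope.

(* Generating function  t |-> ((1 + lam x e^t)/(1 + lam x))^(1/lam).
   Real power via Rpower (base is positive for t near 0 when 1 + lam x > 0). *)
Definition bel_gen (lam x t : R) : R :=
  Rpower ((1 + lam * x * exp t) / (1 + lam * x)) (1 / lam).

(* Bel_{n,lam}(x) = n-th Taylor coefficient times n!, i.e. the n-th
   derivative in t at t = 0 of the generating function. *)
Definition Bel (n : nat) (lam x : R) : R :=
  Derive_n (fun t => bel_gen lam x t) n 0.

Definition sum_lt (n : nat) (f : nat -> R) : R :=
  fold_right Rplus 0 (map f (seq 0 n)).

(* Main.v *)
Require Import Defs.
From Stdlib Require Import Reals List Lra Lia.
From Coquelicot Require Import Coquelicot.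
Open Scope R_scope.

Fixpoint peval (p : list R) (y : R) : R :=
  match p with nil => 0 | c :: q => c + y * peval q y end.
Fixpoint padd (p q : list R) : list R :=
  match p, q with
  | nil, _ => q
  | _, nil => p
  | a :: p', b :: q' => (a + b) :: padd p' q'
  end.
Definition pscale (c : R) (p : list R) := map (Rmult c) p.
Fixpoint pder (p : list R) : list R :=
  match p with nil => nil | c :: q => padd q (0 :: pder q) end.

Lemma peval_padd p q y : peval (padd p q) y = peval p y + peval q y.
Proof.
  revert q; induction p as [|a p IH]; intros [|b q]; simpl; try ring.
  rewrite IH; ring.
Qed.

Lemma peval_pscale c p y : peval (pscale c p) y = c * peval p y.
Proof. induction p as [|a p IH]; simpl; [ring|]. rewrite IH; ring. Qed.

Lemma dconst (c y : R) : is_derive (fun _ : R => c) y 0.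
Proof. exact (is_derive_const c y). Qed.

Lemma did (y : R) : is_derive (fun t : R => t) y 1.
Proof. exact (is_derive_id y). Qed.

Lemma peval_pder p y : is_derive (peval p) y (peval (pder p) y).
Proof.
  induction p as [|c q IH]; simpl.
  - apply dconst.
  - rewrite peval_padd; simpl.
    replace (peval q y + (0 + y * peval (pder q) y))
      with (0 + (1 * peval q y + y * peval (pder q) y)) by ring.
    apply (is_derive_plus (fun _ => c) (fun y => y * peval q y)).
    + apply dconst.
    + apply (Derive.is_derive_mult (fun y => y) (peval q)); [apply did | exact IH].
Qed.

Definition Qp (a : R) : nat -> list R :=
  fix Q k := match k with
  | O => 1 :: nil
  | S k => let q := Q k in
      0 :: padd (pscale a q) (padd (pder q) (pscale (-1) (0 :: pder q)))
  end.

Lemma Qp_S a k y : peval (Qp a (S k)) y =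
  a * y * peval (Qp a k) y + y * (1 - y) * peval (pder (Qp a k)) y.
Proof.
  change (Qp a (S k)) with (0 :: padd (pscale a (Qp a k))
     (padd (pder (Qp a k)) (pscale (-1) (0 :: pder (Qp a k))))).
  cbn [peval]. rewrite !peval_padd, !peval_pscale. cbn [peval]. ring.
Qed.

Lemma Qp_S0 a k : peval (Qp a (S k)) 0 = 0.
Proof. rewrite Qp_S; ring. Qed.

Lemma Qp_d0 a k : peval (pder (Qp a (S k))) 0 = a.
Proof.
  induction k as [|k IH].
  - simpl. ring.
  - change (Qp a (S (S k))) with (0 :: padd (pscale a (Qp a (S k)))
     (padd (pder (Qp a (S k))) (pscale (-1) (0 :: pder (Qp a (S k)))))).
    cbn [pder]. rewrite peval_padd. cbn [peval].
    rewrite !peval_padd, !peval_pscale. cbn [peval]. rewrite IH, Qp_S0. ring.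
Qed.

Fixpoint sm (f : nat -> R) (n : nat) : R :=
  match n with O => 0 | S n => sm f n + f n end.

Lemma sm_ext f g n : (forall k, (k < n)%nat -> f k = g k) -> sm f n = sm g n.
Proof.
  induction n; intros H; simpl; auto.
  rewrite IHn by (intros; apply H; lia). rewrite H by lia. auto.
Qed.

Lemma sm_plus f g n : sm (fun k => f k + g k) n = sm f n + sm g n.
Proof. induction n; simpl; [ring|]. rewrite IHn; ring. Qed.

Lemma sm_shift f n : sm f (S n) = f 0%nat + sm (fun k => f (S k)) n.
Proof. induction n; simpl in *; [ring|]. rewrite IHn; ring. Qed.

Lemma sum_lt_sm n f : sum_lt n f = sm f n.
Proof.
  unfold sum_lt.
  assert (H : forall s, fold_right Rplus 0 (map f (seq s n)) = sm (fun k => f (s + k)%nat) n).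
  { induction n; intros s; [simpl; auto|].
    cbn [seq map fold_right]. rewrite IHn. rewrite sm_shift. rewrite Nat.add_0_r. f_equal.
    apply sm_ext; intros; f_equal; lia. }
  rewrite H. apply sm_ext; auto.
Qed.

Lemma binom_step (h : nat -> R) n :
  sm (fun l => Binomial.C (S n) l * h l) (S (S n)) =
  sm (fun l => Binomial.C n l * h l) (S n) + sm (fun l => Binomial.C n l * h (S l)) (S n).
Proof.
  rewrite sm_shift. cbn [sm]. rewrite C_n_0, C_n_n.
  rewrite (sm_ext (fun k => Binomial.C (S n) (S k) * h (S k))
                  (fun k => Binomial.C n k * h (S k) + Binomial.C n (S k) * h (S k))).
  2:{ intros k Hk. rewrite <- Binomial.pascal by lia. ring. }
  rewrite sm_plus.
  replace (sm (fun l => Binomial.C n l * h l) n + Binomial.C n n * h n)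
    with (sm (fun l => Binomial.C n l * h l) (S n)) by reflexivity.
  rewrite sm_shift, C_n_0, C_n_n. ring.
Qed.

Lemma is_derive_sm (f : nat -> R -> R) (f' : nat -> R) m t :
  (forall k, (k < m)%nat -> is_derive (f k) t (f' k)) ->
  is_derive (fun t => sm (fun k => f k t) m) t (sm f' m).
Proof.
  induction m; intros H; simpl.
  - apply dconst.
  - apply (is_derive_plus (fun t => sm (fun k => f k t) m) (f m)).
    + apply IHm; intros; apply H; lia.
    + apply H; lia.
Qed.

Definition yf (lam x t : R) := lam * x * exp t / (1 + lam * x * exp t).

Lemma dG lam x t : lam <> 0 -> 0 < 1 + lam * x -> 0 < 1 + lam * x * exp t ->
  is_derive (bel_gen lam x) t (bel_gen lam x t * (1 / lam * yf lam x t)).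
Proof.
  intros Hl Hx Ht. unfold bel_gen, Rpower, yf.
  auto_derive.
  - apply Rdiv_lt_0_compat; lra.
  - unfold Rdiv. field. lra.
Qed.

Lemma dy lam x t : 0 < 1 + lam * x * exp t ->
  is_derive (yf lam x) t (yf lam x t * (1 - yf lam x t)).
Proof.
  intros Ht. unfold yf. auto_derive.
  - lra.
  - field. lra.
Qed.

Lemma dexp t : is_derive exp t (exp t).
Proof. auto_derive; auto; ring. Qed.

Lemma is_derive_eq (f : R -> R) x l l' : is_derive f x l -> l = l' -> is_derive f x l'.
Proof. intros H ->; exact H. Qed.

Definition gg lam x k t := bel_gen lam x t * peval (Qp (1 / lam) k) (yf lam x t).

Lemma dg lam x k t : lam <> 0 -> 0 < 1 + lam * x -> 0 < 1 + lam * x * exp t ->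
  is_derive (gg lam x k) t (gg lam x (S k) t).
Proof.
  intros Hl Hx Ht. unfold gg.
  eapply is_derive_eq.
  { apply (Derive.is_derive_mult (bel_gen lam x) (fun t => peval (Qp (1 / lam) k) (yf lam x t))).
      - apply dG; auto.
      - apply (is_derive_comp (peval (Qp (1/lam) k)) (yf lam x)).
        + apply peval_pder.
        + apply dy; auto. }
  - rewrite Qp_S. simpl. unfold scal; simpl. unfold mult; simpl. ring.
Qed.

Lemma loc_pos (f : R -> R) t : continuous f t -> 0 < f t -> locally t (fun u => 0 < f u).
Proof.
  intros Hc Hp.
  assert (L : locally (f t) (fun v : R => 0 < v)) by (apply (open_gt 0); exact Hp).
  exact (Hc _ L).
Qed.

Lemma locU lam x t : 0 < 1 + lam * x * exp t -> locally t (fun u => 0 < 1 + lam * x * exp u).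
Proof.
  intros H. apply (loc_pos (fun u => 1 + lam * x * exp u)); auto.
  apply (ex_derive_continuous (fun u : R => 1 + lam * x * exp u)). auto_derive. auto.
Qed.

Lemma Dn lam x k t : lam <> 0 -> 0 < 1 + lam * x -> 0 < 1 + lam * x * exp t ->
  Derive_n (fun t => bel_gen lam x t) k t = gg lam x k t.
Proof.
  intros Hl Hx. revert t. induction k as [|k IH]; intros t Ht.
  - simpl. unfold gg. simpl. ring.
  - simpl. rewrite (Derive_ext_loc _ (gg lam x k)).
    + apply is_derive_unique. apply dg; auto.
    + eapply filter_imp; [|apply locU; exact Ht]. intros u Hu. apply IH; auto.
Qed.

Lemma dsum n (h : nat -> R -> R) (t : R) :
  (forall l, is_derive (h l) t (h (S l) t)) ->
  is_derive (fun t => exp t * sm (fun l => Binomial.C n l * h l t) (S n)) t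
    (exp t * sm (fun l => Binomial.C (S n) l * h l t) (S (S n))).
Proof.
  intros H. eapply is_derive_eq.
  { apply (Derive.is_derive_mult exp (fun t => sm (fun l => Binomial.C n l * h l t) (S n))).
    - apply dexp.
    - apply (is_derive_sm (fun l t => Binomial.C n l * h l t) (fun l => Binomial.C n l * h (S l) t)).
      intros k _. apply is_derive_scal. apply H. }
  rewrite binom_step. symmetry; apply Rmult_plus_distr_l.
Qed.

Lemma Prel lam x n : lam <> 0 -> 0 < 1 + lam * x -> forall t, 0 < 1 + lam * x * exp t ->
  gg lam x (S n) t + lam * x * (exp t * sm (fun l => Binomial.C n l * gg lam x (S l) t) (S n))
  = x * (exp t * sm (fun l => Binomial.C n l * gg lam x l t) (S n)).
Proof.
  intros Hl Hx. induction n as [|n IH]; intros t Ht.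
  - simpl. rewrite C_n_0. unfold gg. rewrite Qp_S. simpl. unfold yf. field. lra.
  - assert (D1 : is_derive (fun t => gg lam x (S n) t + lam * x * (exp t * sm (fun l => Binomial.C n l * gg lam x (S l) t) (S n))) t
       (gg lam x (S (S n)) t + lam * x * (exp t * sm (fun l => Binomial.C (S n) l * gg lam x (S l) t) (S (S n))))).
    { apply (is_derive_plus (gg lam x (S n))). apply dg; auto.
      apply is_derive_scal. apply (dsum n (fun l => gg lam x (S l))). intros l.
      apply dg; auto. }
    assert (D2 : is_derive (fun t => x * (exp t * sm (fun l => Binomial.C n l * gg lam x l t) (S n))) t
       (x * (exp t * sm (fun l => Binomial.C (S n) l * gg lam x l t) (S (S n))))).
    { apply is_derive_scal. apply (dsum n (gg lam x)). intros l. apply dg; auto. }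
    assert (D3 : is_derive (fun t => gg lam x (S n) t + lam * x * (exp t * sm (fun l => Binomial.C n l * gg lam x (S l) t) (S n))) t
       (x * (exp t * sm (fun l => Binomial.C (S n) l * gg lam x l t) (S (S n))))).
    { eapply is_derive_ext_loc; [|exact D2]. eapply filter_imp; [|apply (locU lam x t Ht)].
      intros u Hu. symmetry. apply IH; auto. }
    apply is_derive_unique in D1. apply is_derive_unique in D3. congruence.
Qed.

Lemma Bform k lam z : lam <> 0 -> 0 < 1 + lam * z ->
  Bel k lam z = peval (Qp (1 / lam) k) (lam * z / (1 + lam * z)).
Proof.
  intros Hl Hz. unfold Bel. rewrite Dn; auto.
  2:{ rewrite exp_0; lra. }
  unfold gg, bel_gen, yf, Rpower. rewrite exp_0, !Rmult_1_r.
  replace ((1 + lam * z) / (1 + lam * z)) with 1 by (field; lra).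
  rewrite ln_1, Rmult_0_r, exp_0. ring.
Qed.

Lemma gq k lam x : lam <> 0 -> 0 < 1 + lam * x ->
  gg lam x k 0 = peval (Qp (1 / lam) k) (lam * x / (1 + lam * x)).
Proof.
  intros Hl Hx. rewrite <- Bform; auto. unfold Bel. rewrite Dn; auto. rewrite exp_0; lra.
Qed.

Lemma sm_lin (c f g : nat -> R) m n :
  sm (fun k => c k * (f k - m * g k)) n = sm (fun k => c k * f k) n - m * sm (fun k => c k * g k) n.
Proof. induction n; simpl; [ring|]. rewrite IHn; ring. Qed.

Lemma sm_zero n : sm (fun _ => 0) n = 0.
Proof. induction n; simpl; [ring|]. rewrite IHn; ring. Qed.

Lemma dy0 lam x : 0 < 1 + lam * x ->
  is_derive (fun z => lam * z / (1 + lam * z)) x (lam / (1 + lam * x) ^ 2).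
Proof. intros H. auto_derive; [lra|]. field. lra. Qed.

Theorem theorem10 (lam : R) (n : nat) (x : R) :
  lam <> 0 -> 0 < 1 + lam * x ->
  is_derive (fun y => Bel n lam y) x
    (/ (1 + lam * x) *
     sum_lt n (fun l => Binomial.C n l * (Bel l lam x - lam * Bel (S l) lam x))).
Proof.
  intros Hl Hx.
  apply (is_derive_ext_loc (fun z => peval (Qp (1 / lam) n) (lam * z / (1 + lam * z)))).
  { eapply filter_imp; [| apply (loc_pos (fun z => 1 + lam * z) x); auto].
    - intros z Hz. symmetry. apply Bform; auto.
    - apply (ex_derive_continuous (fun z : R => 1 + lam * z)). auto_derive. auto. }
  eapply is_derive_eq.
  { apply (is_derive_comp (peval (Qp (1 / lam) n)) (fun z => lam * z / (1 + lam * z))).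
    - apply peval_pder.
    - apply dy0; auto. }
  unfold scal; simpl; unfold mult; simpl.
  rewrite sum_lt_sm.
  rewrite (sm_ext _ (fun l => Binomial.C n l * (peval (Qp (1 / lam) l) (lam * x / (1 + lam * x))
        - lam * peval (Qp (1 / lam) (S l)) (lam * x / (1 + lam * x))))).
  2:{ intros k _. rewrite !Bform; auto. }
  rewrite sm_lin.
  destruct (Req_dec x 0) as [H0|H0].
  - subst x.
    replace (lam * 0 / (1 + lam * 0)) with 0 by (field; lra).
    destruct n as [|m].
    + simpl. ring.
    + rewrite Qp_d0, !sm_shift.
      rewrite (sm_ext (fun k => Binomial.C (S m) (S k) * peval (Qp (1 / lam) (S k)) 0) (fun _ => 0)).
      2:{ intros; rewrite Qp_S0; ring. }
      rewrite (sm_ext (fun k => Binomial.C (S m) (S k) * peval (Qp (1 / lam) (S (S k))) 0) (fun _ => 0)).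
      2:{ intros; rewrite Qp_S0; ring. }
      rewrite sm_zero, C_n_0, Qp_S0. simpl. field. lra.
  - pose proof (Prel lam x n Hl Hx 0) as P0.
    rewrite exp_0 in P0. specialize (P0 ltac:(lra)).
    rewrite (sm_ext (fun l => Binomial.C n l * gg lam x (S l) 0)
         (fun l => Binomial.C n l * peval (Qp (1 / lam) (S l)) (lam * x / (1 + lam * x)))) in P0
      by (intros; rewrite gq; auto).
    rewrite (sm_ext (fun l => Binomial.C n l * gg lam x l 0)
         (fun l => Binomial.C n l * peval (Qp (1 / lam) l) (lam * x / (1 + lam * x)))) in P0
      by (intros; rewrite gq; auto).
    rewrite gq in P0 by auto. cbn [sm] in P0. rewrite C_n_n in P0.
    set (y0 := lam * x / (1 + lam * x)) in *.
    set (A0 := sm (fun k => Binomial.C n k * peval (Qp (1 / lam) k) y0) n) in *.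
    set (A1 := sm (fun k => Binomial.C n k * peval (Qp (1 / lam) (S k)) y0) n) in *.
    set (q' := peval (pder (Qp (1 / lam) n)) y0).
    assert (K : A0 - lam * A1 = lam * q' / (1 + lam * x)).
    { apply (Rmult_eq_reg_l x); [|auto].
      rewrite Qp_S in P0. fold q' in P0.
      transitivity ((1 + lam * x) * (1 / lam * y0 * peval (Qp (1 / lam) n) y0 + y0 * (1 - y0) * q')
                    - x * peval (Qp (1 / lam) n) y0).
      { lra. }
      unfold y0. field. split; [lra|auto]. }
    rewrite K. field. lra.
Qed.
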